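(* Let $P=\bigotimes_{i=1}^n P_i$, $Q=\bigotimes_{i=1}^nQ_i$ be product distributions on $[q]^n$ with $P\ne Q$, $\mathcal C$ a coordinate-wise greedy coupling, $\pi(\omega)=\Pr_{\mathcal C}[X=\omega\mid X\ne Y]$, and $f$ the estimator defined below. Then $$\mathbb E_{\omega\sim\pi}f(\omega)=\frac{d_{TV}(P,Q)}{\Pr_{\mathcal C}[X\ne Y]}=\frac{d_{TV}(P,Q)}{1-\prod_{i=1}^n(1-d_{TV}(P_i,Q_i))},$$ $$\frac1n\le \mathbb E_{\omega\sim\pi}f(\omega)\le 1,$$ and $0\le f(\omega)\le 1$ for every $\omega\in[q]^n$ with $\pi(\omega)>0$.
   Context: $d_{TV}(P,Q)=\frac12\sum_{\omega}|P(\omega)-Q(\omega)|$ (equivalently, the minimum of $\Pr[X\ne Y]$ over all couplings of $P$ and $Q$). A coordinate-wise greedy coupling $\mathcal C$ is a distribution on pairs $(X,Y)$ of the form $\mathcal C=\mathcal C_1\otimes\cdots\otimes\mathcal C_n$, where each $\mathcal C_i$ is a coupling of $P_i$ and $Q_i$ with $\Pr_{\mathcal C_i}[X_i=Y_i=c]=\min\{P_i(c),Q_i(c)\}$ for all $c\in[q]$. The estimator is defined, for $\omega$ with $\Pr_{\mathcal C}[X=\omega\wedge X\ne Y]>0$ (equivalently $\pi(\omega)>0$), by $$f(\omega)=\frac{\max\{0,P(\omega)-Q(\omega)\}}{\Pr_{\mathcal C}[X=\omega\wedge X\neq Y]}.$$ *)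

(* Defs.v *)
From HB Require Import structures.
From mathcomp Require Import all_boot all_order all_algebra.
Set Implicit Arguments. Unset Strict Implicit. Unset Printing Implicit Defensive.
Import Order.TTheory GRing.Theory Num.Theory.
Local Open Scope ring_scope.

Section Defs.
Variable R : realFieldType.

Definition is_dist (T : finType) (p : T -> R) :=
  (forall t, 0 <= p t) /\ \sum_t p t = 1.

Definition dTV (T : finType) (p p' : T -> R) : R :=
  2^-1 * \sum_t `|p t - p' t|.

Definition is_coupling (q : nat) (C : 'I_q -> 'I_q -> R) (p p' : 'I_q -> R) :=
  [/\ forall a b, 0 <= C a b,
      forall a, \sum_b C a b = p a &
      forall b, \sum_a C a b = p' b].

Definition is_greedy_coupling (q : nat) (C : 'I_q -> 'I_q -> R) (p p' : 'I_q -> R) :=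
  is_coupling C p p' /\ forall c, C c c = Num.min (p c) (p' c).

Variables (n q : nat).
Notation word := {ffun 'I_n -> 'I_q}.

Definition prodd (P : 'I_n -> 'I_q -> R) (w : word) : R := \prod_i P i (w i).

Definition prodC (C : 'I_n -> 'I_q -> 'I_q -> R) (x y : word) : R :=
  \prod_i C i (x i) (y i).

Definition PrNe C : R := \sum_(x : word) \sum_(y : word | y != x) prodC C x y.

Definition PrXeqNe C (w : word) : R := \sum_(y : word | y != w) prodC C w y.

Definition piC C (w : word) : R := PrXeqNe C w / PrNe C.

Definition estim (P Q : 'I_n -> 'I_q -> R) C (w : word) : R :=
  Num.max 0 (prodd P w - prodd Q w) / PrXeqNe C w.

Definition Epi_f (P Q : 'I_n -> 'I_q -> R) C : R :=
  \sum_(w : word | 0 < piC C w) piC C w * estim P Q C w.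

End Defs.

(* Main.v *)
Require Import Defs.
From HB Require Import structures.
From mathcomp Require Import all_boot all_order all_algebra.
From mathcomp Require Import ring lra.
Import Order.TTheory GRing.Theory Num.Theory.
Local Open Scope ring_scope.

Lemma minE (R : realFieldType) (a b : R) : Num.min a b = (a + b - `|a - b|) / 2.
Proof.
case: (leP a b) => h.
  by rewrite ler0_norm ?subr_le0 //; field.
by rewrite ger0_norm; [field | rewrite subr_ge0 ltW].
Qed.

Lemma maxE (R : realFieldType) (x : R) : Num.max 0 x = (x + `|x|) / 2.
Proof.
case: (leP 0 x) => h.
  by rewrite ger0_norm //; field.
by rewrite ltr0_norm //; field.
Qed.

Lemma tv_max (R : realFieldType) (T : finType) (p p' : T -> R) :
  \sum_t p t = 1 -> \sum_t p' t = 1 ->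
  \sum_t Num.max 0 (p t - p' t) = dTV p p'.
Proof.
move=> h h'.
under eq_bigr do rewrite maxE.
by rewrite -mulr_suml big_split /= sumrB h h' subrr add0r /dTV mulrC.
Qed.

Lemma union_bound (R : realFieldType) m (a : 'I_m -> R) :
  (forall i, 0 <= a i <= 1) -> 1 - \prod_i a i <= \sum_i (1 - a i).
Proof.
elim: m a => [|m IH] a ha.
  by rewrite !big_ord0 subrr.
rewrite !big_ord_recr /=.
have := IH (fun i => a (widen_ord (leqnSn m) i)) (fun i => ha _).
set p := \prod_(i < m) _; set s := \sum_(i < m) _ => h1.
have p0 : 0 <= p by apply: prodr_ge0 => i _; case/andP: (ha (widen_ord (leqnSn m) i)).
have p1 : p <= 1 by apply: prodr_ile1 => i _; exact: ha.
case/andP: (ha ord_max) => h2 h3.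
nra.
Qed.

Section S.
Variable R : realFieldType.
Variables n q : nat.
Variables (P Q : 'I_n -> 'I_q -> R) (C : 'I_n -> 'I_q -> 'I_q -> R).
Hypothesis HP : forall i, is_dist (P i).
Hypothesis HQ : forall i, is_dist (Q i).
Hypothesis HC : forall i, is_greedy_coupling (C i) (P i) (Q i).
Local Notation word := {ffun 'I_n -> 'I_q}.

Lemma sum_prodd_gen (F : 'I_n -> 'I_q -> R) :
  (forall i, \sum_c F i c = 1) -> \sum_(w : word) \prod_i F i (w i) = 1.
Proof. by move=> hF; rewrite -bigA_distr_bigA big1. Qed.

Lemma sumP : \sum_(w : word) prodd P w = 1.
Proof. by apply: sum_prodd_gen => i; case: (HP i). Qed.

Lemma sumQ : \sum_(w : word) prodd Q w = 1.
Proof. by apply: sum_prodd_gen => i; case: (HQ i). Qed.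

Definition mm (w : word) := \prod_i C i (w i) (w i).

Lemma Cmin i c : C i c c = Num.min (P i c) (Q i c).
Proof. by case: (HC i). Qed.

Lemma C_ge0 i a b : 0 <= C i a b.
Proof. by case: (HC i) => [[h _ _] _]. Qed.

Lemma XE w : PrXeqNe C w = prodd P w - mm w.
Proof.
have: \sum_y prodC C w y = prodd P w.
  rewrite /prodC -(bigA_distr_bigA (fun i b => C i (w i) b)) /prodd.
  by apply: eq_bigr => i _; case: (HC i) => [[_ h _] _]; rewrite h.
rewrite (bigD1 w) //= => <-.
by rewrite /PrXeqNe /mm /prodC addrAC subrr add0r.
Qed.

Lemma m_le w : [/\ 0 <= mm w, mm w <= prodd P w & mm w <= prodd Q w].
Proof.
split.
- by apply: prodr_ge0 => i _; apply: C_ge0.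
- apply: ler_prod => i _; rewrite C_ge0 Cmin /=.
  by rewrite ge_min lexx.
- apply: ler_prod => i _; rewrite C_ge0 Cmin /=.
  by rewrite ge_min lexx orbT.
Qed.

Lemma X_ge0 w : 0 <= PrXeqNe C w.
Proof. by rewrite XE subr_ge0; case: (m_le w). Qed.

Lemma NE : PrNe C = \sum_(w : word) PrXeqNe C w.
Proof. by []. Qed.


Lemma NE2 : PrNe C = 1 - \prod_i \sum_c C i c c.
Proof.
rewrite NE (eq_bigr _ (fun w _ => XE w)).
by rewrite sumrB sumP /mm (bigA_distr_bigA (fun i c => C i c c)).
Qed.

Lemma diag_sum i : \sum_c C i c c = 1 - dTV (P i) (Q i).
Proof.
under eq_bigr do rewrite Cmin minE.
rewrite -mulr_suml sumrB big_split /=.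
case: (HP i) => _ ->; case: (HQ i) => _ ->.
by rewrite /dTV; field.
Qed.

Lemma a_bounds i : 0 <= \sum_c C i c c <= 1.
Proof.
apply/andP; split; first by apply: sumr_ge0 => c _; apply: C_ge0.
case: (HP i) => _ <-; apply: ler_sum => c _.
by rewrite Cmin ge_min lexx.
Qed.

Lemma M_le w : Num.max 0 (prodd P w - prodd Q w) <= PrXeqNe C w.
Proof.
rewrite ge_max X_ge0 /= XE.
case: (m_le w) => h1 h2 h3.
by rewrite lerB.
Qed.

Lemma M_zero w : PrXeqNe C w = 0 -> Num.max 0 (prodd P w - prodd Q w) = 0.
Proof.
rewrite XE => /eqP; rewrite subr_eq0 => /eqP h.
case: (m_le w) => h1 h2 h3.
by apply: max_l; rewrite subr_le0 h.
Qed.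

Lemma N_pos : (exists w : word, prodd P w != prodd Q w) -> 0 < PrNe C.
Proof.
move=> [w0 hw0].
have N0 : 0 <= PrNe C by rewrite NE; apply: sumr_ge0 => w _; apply: X_ge0.
rewrite lt_neqAle N0 andbT; apply/negP => /eqP hN.
have hX : forall w, PrXeqNe C w = 0.
  move=> w; exact: (@psumr_eq0P R _ xpredT (PrXeqNe C) (fun v _ => X_ge0 v) (esym hN) w isT).
have hle : forall w, prodd P w <= prodd Q w.
  move=> w; have := hX w; rewrite XE => /eqP; rewrite subr_eq0 => /eqP ->.
  by case: (m_le w).
have hs : \sum_(w : word) (prodd Q w - prodd P w) = 0.
  by rewrite sumrB sumP sumQ subrr.
have hQP : forall w, prodd Q w - prodd P w = 0.
  have hnn : forall v : word, xpredT v -> 0 <= prodd Q v - prodd P v.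
    by move=> v _; rewrite subr_ge0.
  move=> w; exact: (@psumr_eq0P R _ xpredT _ hnn hs w isT).
by move: hw0; rewrite eq_sym -subr_eq0 hQP eqxx.
Qed.

Lemma marg i (g : 'I_q -> R) (F : 'I_n -> 'I_q -> R) :
  (forall j, \sum_c F j c = 1) ->
  \sum_(w : word) g (w i) * \prod_j F j (w j) = \sum_c g c * F i c.
Proof.
move=> hF.
pose G j c := if j == i then g c * F j c else F j c.
transitivity (\sum_(w : word) \prod_j G j (w j)).
  apply: eq_bigr => w _.
  rewrite (bigD1 i) // [in RHS](bigD1 i) //= /G eqxx mulrA.
  congr (_ * _); apply: eq_bigr => j /negbTE.
  by move=> ->.
have h1 : \prod_(j < n | j != i) \sum_c G j c = 1.
  by apply: big1 => j /negbTE hj; rewrite /G hj; apply: hF.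
by rewrite -(bigA_distr_bigA G) (bigD1 i) //= h1 mulr1 /G eqxx.
Qed.

Lemma di_le i : \sum_c Num.max 0 (P i c - Q i c)
   <= \sum_(w : word) Num.max 0 (prodd P w - prodd Q w).
Proof.
pose g c : R := if 0 < P i c - Q i c then 1 else 0.
have -> : \sum_c Num.max 0 (P i c - Q i c) = \sum_c g c * (P i c - Q i c).
  apply: eq_bigr => c _; rewrite /g; case: ifP => h.
    by rewrite mul1r max_r // ltW.
  by rewrite mul0r max_l // leNgt h.
under eq_bigr do rewrite mulrBr.
rewrite sumrB -(marg i g P); last by move=> j; case: (HP j).
rewrite -(marg i g Q); last by move=> j; case: (HQ j).
rewrite -sumrB; apply: ler_sum => w _.
rewrite -mulrBr /g -/(prodd P w) -/(prodd Q w); case: ifP => _.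
  by rewrite mul1r le_max lexx orbT.
by rewrite mul0r le_max lexx.
Qed.

Lemma EpiE : 0 < PrNe C -> Epi_f P Q C = dTV (prodd P) (prodd Q) / PrNe C.
Proof.
move=> hN.
rewrite /Epi_f big_mkcond -(@tv_max R _ _ _ sumP sumQ) mulr_suml.
apply: eq_bigr => w _.
have hN0 : PrNe C != 0 by rewrite gt_eqF.
case: ifP => h.
  have hX : PrXeqNe C w != 0.
    by apply: contraTneq h; rewrite /piC => ->; rewrite mul0r ltxx.
  rewrite /piC /estim; field.
  by rewrite hX hN0.
have hX : PrXeqNe C w = 0.
  have : 0 <= piC C w by rewrite /piC divr_ge0 ?X_ge0 ?ltW.
  rewrite le_eqVlt h orbF eq_sym /piC mulf_eq0 invr_eq0 (negbTE hN0) orbF.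
  by move/eqP.
by rewrite M_zero // mul0r.
Qed.

End S.

Theorem lemma3p3 (R : realFieldType) (n q : nat)
  (P Q : 'I_n -> 'I_q -> R) (C : 'I_n -> 'I_q -> 'I_q -> R) :
  (forall i, is_dist (P i)) -> (forall i, is_dist (Q i)) ->
  (exists w : {ffun 'I_n -> 'I_q}, prodd P w != prodd Q w) ->
  (forall i, is_greedy_coupling (C i) (P i) (Q i)) ->
  [/\ Epi_f P Q C = dTV (prodd P) (prodd Q) / PrNe C,
      dTV (prodd P) (prodd Q) / PrNe C
        = dTV (prodd P) (prodd Q) / (1 - \prod_i (1 - dTV (P i) (Q i))),
      n%:R^-1 <= Epi_f P Q C <= 1 &
      forall w : {ffun 'I_n -> 'I_q}, 0 < piC C w ->
        0 <= estim P Q C w <= 1].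
Proof.
move=> HP HQ hw HC.
have hN := (@N_pos _ _ _ _ _ _ HP HQ HC hw).
have hn : (0 < n)%N.
  case: hw => w; apply: contraR; rewrite -leqNgt leqn0 => /eqP n0.
  rewrite /prodd !big1 // => i; exfalso; have := leq_trans (ltn_ord i) (eq_leq n0); by rewrite ltn0.
have sP := (@sumP _ _ _ _ HP); have sQ := (@sumQ _ _ _ _ HQ).
have tvle : dTV (prodd P) (prodd Q) <= PrNe C.
  rewrite -(@tv_max R _ _ _ sP sQ) NE; apply: ler_sum => w _; exact: (@M_le _ _ _ _ _ _ HC).
have lower : PrNe C <= dTV (prodd P) (prodd Q) *+ n.
  rewrite (@NE2 _ _ _ _ _ _ HP HC); apply: le_trans (@union_bound _ _ (fun i => \sum_c C i c c) (@a_bounds _ _ _ _ _ _ HP HC)) _.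
  rewrite -[X in _ <= _ *+ X](card_ord n) -sumr_const.
  apply: ler_sum => i _; rewrite (@diag_sum _ _ _ _ _ _ HP HQ HC).
  set d := dTV _ _; have -> : 1 - (1 - d) = d by ring.
  rewrite /d -(@tv_max R _ _ _ (proj2 (HP i)) (proj2 (HQ i))) -(@tv_max R _ _ _ sP sQ).
  exact: (@di_le _ _ _ _ _ HP HQ).
split.
- exact: (@EpiE _ _ _ _ _ _ HP HQ HC hN).
- by rewrite (@NE2 _ _ _ _ _ _ HP HC); congr (_ / (1 - _)); apply: eq_bigr => i _; apply: (@diag_sum _ _ _ _ _ _ HP HQ HC).
- rewrite (@EpiE _ _ _ _ _ _ HP HQ HC hN); apply/andP; split.
    rewrite ler_pdivlMr //.
    apply: le_trans (ler_wpM2l _ lower) _; first by rewrite invr_ge0 ler0n.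
    by rewrite -[dTV _ _ *+ n]mulr_natr mulrCA mulVf ?mulr1 // pnatr_eq0 -lt0n.
  by rewrite ler_pdivrMr // mul1r.
- move=> w hpi.
  have hX : 0 < PrXeqNe C w.
    rewrite lt_neqAle (@X_ge0 _ _ _ _ _ _ HC) andbT eq_sym; apply: contraTneq hpi; rewrite /piC => ->.
    by rewrite mul0r ltxx.
  rewrite /estim; apply/andP; split.
    by apply: divr_ge0; [rewrite le_max lexx | exact: ltW].
  by rewrite ler_pdivrMr // mul1r (@M_le _ _ _ _ _ _ HC).
Qed.
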